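(* Let $\nu\in(0,1]$, $\varrho,c_l,\alpha,\delta>0$, $x\in K_\nu^\varrho$, $g^\delta\in\mathbb Y$ with $\|g^\delta-Ax\|_{\mathbb Y}\le\delta$, and $\hat x_\alpha\in R_\alpha(g^\delta)$. If $c_l\varrho^{-1/\nu}\delta^{1/\nu}\le\alpha$, then $\varrho_\nu(\hat x_\alpha)\le(2+c_l^{-\nu})\varrho$.
   Context: Standing setting: $\mathbb X$ real Banach space, $\tau$ a topology with $(\mathbb X,\tau)$ locally convex Hausdorff; $\mathcal R:\mathbb X\to(-\infty,\infty]$ proper convex with $\tau$-compact sublevel sets; $\mathbb Y$ real Hilbert space; $A:\mathbb X\to\mathbb Y$ linear, $\tau$-to-weak continuous. $T_\alpha(x,g):=\frac1{2\alpha}\|g-Ax\|_{\mathbb Y}^2+\mathcal R(x)$, $R_\alpha(g):=\operatorname{argmin}_{x\in\mathrm{dom}(\mathcal R)}T_\alpha(x,g)$. For $\nu\ge0$, $\varrho_\nu(x):=\sup\{\alpha^{-\nu}\|Ax-Ax_\alpha\|_{\mathbb Y}:\alpha>0,x_\alpha\in R_\alpha(Ax)\}$ and $K_\nu^\varrho:=\{x\in\mathbb X:\varrho_\nu(x)\le\varrho\}$. *)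

(* Defs.v *)
From HB Require Import structures.
From mathcomp Require Import all_boot all_order all_algebra.
From mathcomp Require Import all_classical all_reals all_analysis.
Set Implicit Arguments. Unset Strict Implicit. Unset Printing Implicit Defensive.
Import Order.TTheory GRing.Theory Num.Theory.
Import numFieldNormedType.Exports.
Local Open Scope classical_set_scope.
Local Open Scope ring_scope.

(* A norm on a real vector space that makes it a Banach space
   (the norm of X is a separate datum from the topology tau carried by X). *)
Definition is_banach_norm (R : realType) (X : lmodType R) (nX : X -> R) : Prop :=
  [/\ (forall x, 0 <= nX x),
      (forall x, nX x = 0 -> x = 0),
      (forall (a : R) x, nX (a *: x) = `|a| * nX x),
      (forall x y, nX (x + y) <= nX x + nX y) &
      (forall u : nat -> X,
         (forall e : R, 0 < e -> exists N : nat, forall m n : nat,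
            (N <= m)%N -> (N <= n)%N -> nX (u m - u n) < e) ->
         exists l : X, forall e : R, 0 < e -> exists N : nat, forall n : nat,
            (N <= n)%N -> nX (u n - l) < e)].

Definition is_inner_product (R : realType) (Y : normedModType R)
  (ip : Y -> Y -> R) : Prop :=
  [/\ (forall y z, ip y z = ip z y),
      (forall (a : R) y z w, ip (a *: y + z) w = a * ip y w + ip z w) &
      (forall y, ip y y = `|y| ^+ 2)].

Definition proper_fun (R : realType) (X : Type) (F : X -> \bar R) : Prop :=
  (forall x, F x != -oo%E) /\ (exists x, (F x < +oo)%E).

Definition convex_efun (R : realType) (X : lmodType R) (F : X -> \bar R) : Prop :=
  forall (x y : X) (l : R), 0 < l < 1 ->
    (F (l *: x + (1 - l) *: y)%R <= l%:E * F x + (1 - l)%:E * F y)%E.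

Definition Tik (R : realType) (X : Type) (Y : normedModType R)
  (A : X -> Y) (Rf : X -> \bar R) (alpha : R) (x : X) (g : Y) : \bar R :=
  (((2 * alpha)^-1 * `|g - A x| ^+ 2)%:E + Rf x)%E.

Definition Rmin (R : realType) (X : Type) (Y : normedModType R)
  (A : X -> Y) (Rf : X -> \bar R) (alpha : R) (g : Y) : set X :=
  [set x | (Rf x < +oo)%E /\
     forall z, (Rf z < +oo)%E -> (Tik A Rf alpha x g <= Tik A Rf alpha z g)%E].

Definition rho_nu (R : realType) (X : Type) (Y : normedModType R)
  (A : X -> Y) (Rf : X -> \bar R) (nu : R) (x : X) : \bar R :=
  ereal_sup [set e | exists (alpha : R) (xa : X),
     [/\ 0 < alpha, Rmin A Rf alpha (A x) xa &
         e = (alpha `^ (- nu) * `|A x - A xa|)%:E]].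

Definition Kset (R : realType) (X : Type) (Y : normedModType R)
  (A : X -> Y) (Rf : X -> \bar R) (nu varrho : R) : set X :=
  [set x | (rho_nu A Rf nu x <= varrho%:E)%E].

(* Main.v *)
Require Import Defs.
From HB Require Import structures.
From mathcomp Require Import all_boot all_order all_algebra.
From mathcomp Require Import all_classical all_reals all_analysis.
From mathcomp Require Import ring lra.
Import Order.TTheory GRing.Theory Num.Theory.
Import numFieldNormedType.Exports.
Local Open Scope classical_set_scope.
Local Open Scope ring_scope.
Set Implicit Arguments. Unset Strict Implicit.

Lemma efin_of (R : realType) (e : \bar R) :
  e != -oo%E -> (e < +oo)%E -> exists r : R, e = r%:E.
Proof. by case: e => [r| |] //; exists r. Qed.

Lemma ip0l (R : realType) (Y : normedModType R) (ip : Y -> Y -> R)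
  (hip : is_inner_product ip) w : ip 0 w = 0.
Proof.
case: hip => _ hl _; have := hl 1 0 0 w.
rewrite scaler0 addr0 mul1r => h; lra.
Qed.

Lemma ipDl (R : realType) (Y : normedModType R) (ip : Y -> Y -> R)
  (hip : is_inner_product ip) y z w : ip (y + z) w = ip y w + ip z w.
Proof. case: hip => _ hl _; by have := hl 1 y z w; rewrite scale1r mul1r. Qed.

Lemma ipZl (R : realType) (Y : normedModType R) (ip : Y -> Y -> R)
  (hip : is_inner_product ip) a y w : ip (a *: y) w = a * ip y w.
Proof.
have h0 := ip0l hip w.
case: hip => _ hl _; by have := hl a y 0 w; rewrite addr0 h0 addr0.
Qed.

Lemma ipNl (R : realType) (Y : normedModType R) (ip : Y -> Y -> R)
  (hip : is_inner_product ip) y w : ip (- y) w = - ip y w.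
Proof. by rewrite -scaleN1r (ipZl hip) mulN1r. Qed.

Lemma ipBl (R : realType) (Y : normedModType R) (ip : Y -> Y -> R)
  (hip : is_inner_product ip) y z w : ip (y - z) w = ip y w - ip z w.
Proof. by rewrite (ipDl hip) (ipNl hip). Qed.

Lemma ipC (R : realType) (Y : normedModType R) (ip : Y -> Y -> R)
  (hip : is_inner_product ip) y w : ip y w = ip w y.
Proof. by case: hip. Qed.

Lemma ipBr (R : realType) (Y : normedModType R) (ip : Y -> Y -> R)
  (hip : is_inner_product ip) y z w : ip w (y - z) = ip w y - ip w z.
Proof. by rewrite !(ipC hip w) (ipBl hip). Qed.

Lemma ipZr (R : realType) (Y : normedModType R) (ip : Y -> Y -> R)
  (hip : is_inner_product ip) a y w : ip w (a *: y) = a * ip w y.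
Proof. by rewrite !(ipC hip w) (ipZl hip). Qed.

Lemma ipnn (R : realType) (Y : normedModType R) (ip : Y -> Y -> R)
  (hip : is_inner_product ip) y : ip y y = `|y| ^+ 2.
Proof. by case: hip. Qed.

Lemma ip_expand (R : realType) (Y : normedModType R) (ip : Y -> Y -> R)
  (hip : is_inner_product ip) u v :
  `|u - v| ^+ 2 = `|u| ^+ 2 - 2 * ip u v + `|v| ^+ 2.
Proof.
rewrite -!(ipnn hip) !(ipBl hip) !(ipBr hip) (ipC hip v u); ring.
Qed.

Lemma ip_CS (R : realType) (Y : normedModType R) (ip : Y -> Y -> R)
  (hip : is_inner_product ip) u v : ip u v <= `|u| * `|v|.
Proof.
have [->|v0] := eqVneq v 0.
  by rewrite normr0 mulr0 -(scale0r (0:Y)) (ipZr hip) mul0r.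
have nv : 0 < `|v| by rewrite normr_gt0.
set s := `|v| ^+ 2.
have s0 : 0 < s by rewrite exprn_gt0.
set t := ip u v / s.
have ts : t * s = ip u v by rewrite /t mulfVK // gt_eqF.
have h := ip_expand hip u (t *: v).
rewrite (ipZr hip) normrZ exprMn real_normK ?num_real // -/s in h.
have h0 : 0 <= `|u - t *: v| ^+ 2 by rewrite exprn_ge0.
have hp : ip u v ^+ 2 <= (`|u| * `|v|) ^+ 2.
  rewrite exprMn -/s; nra.
have hu : 0 <= `|u| * `|v| by rewrite mulr_ge0.
nra.
Qed.

Lemma small_le0 (R : realType) (D c : R) : 0 <= c ->
  (forall t, 0 < t -> t < 1 -> D <= t * c) -> D <= 0.
Proof.
move=> c0 h; rewrite leNgt; apply/negP => D0.
have Dc : 0 < D + c by lra.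
pose t := D / (2 * (D + c)).
have tDc : t * (D + c) = D / 2.
  rewrite /t; field; rewrite ?gt_eqF //; lra.
have t0 : 0 < t by rewrite /t divr_gt0 //; lra.
have t1 : t < 1.
  have : t * (D + c) < 1 * (D + c) by rewrite tDc; lra.
  by rewrite ltr_pM2r.
have := h t t0 t1; nra.
Qed.

Lemma vi (R : realType) (X : lmodType R) (Y : normedModType R)
  (ip : Y -> Y -> R) (hip : is_inner_product ip) (A : {linear X -> Y})
  (Rf : X -> \bar R) (hRp : proper_fun Rf) (hRc : convex_efun Rf)
  a g x1 z r1 rz : 0 < a -> Rmin A Rf a g x1 -> Rf x1 = r1%:E -> Rf z = rz%:E ->
  r1 - rz <= a^-1 * ip (g - A x1) (A x1 - A z).
Proof.
move=> a0 [_ hmin] e1 ez.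
set u := g - A x1; set v := A z - A x1.
have hv : A x1 - A z = - v by rewrite /v opprB.
rewrite hv -(scaleN1r v) (ipZr hip).
set p := ip u v; set n := `|v| ^+ 2.
have n0 : 0 <= n by rewrite exprn_ge0.
set K := (2 * a)^-1.
have K0 : 0 < K by rewrite invr_gt0 mulr_gt0.
have aK : a^-1 = 2 * K by rewrite /K invfM mulrA mulfV ?mul1r // pnatr_eq0.
suff : r1 - rz + 2 * K * p <= 0 by rewrite aK; lra.
apply: (@small_le0 _ _ (K * n)); first by rewrite mulr_ge0 // ltW.
move=> t t0 t1.
pose w := t *: z + (1 - t) *: x1.
have hc := hRc z x1 t; rewrite t0 t1 /= in hc; have {}hc := hc isT.
rewrite ez e1 -!EFinM -EFinD -/w in hc.
have [rw ew] : exists rw, Rf w = rw%:E.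
  apply: efin_of; first by case: hRp.
  by apply: le_lt_trans hc _; rewrite ltry.
rewrite ew lee_fin in hc.
have hw : (Rf w < +oo)%E by rewrite ew ltry.
have := hmin w hw; rewrite /Tik ew e1 -!EFinD lee_fin.
have -> : g - A w = u - t *: v.
  rewrite /w linearD !linearZ /= /u /v.
  rewrite scalerBl scale1r scalerN scalerBr !opprD !opprK !addrA.
  by rewrite [g - _ - A x1]addrAC.
rewrite (ip_expand hip u (t *: v)) (ipZr hip) normrZ exprMn real_normK ?num_real // -/p -/n -/K.
move=> h.
have : t * (r1 - rz + 2 * K * p) <= t * (t * (K * n)) by nra.
by rewrite ler_pM2l.
Qed.

Lemma rmin_fin (R : realType) (X : Type) (Y : normedModType R)
  (A : X -> Y) (Rf : X -> \bar R) (hRp : proper_fun Rf) a g x :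
  Rmin A Rf a g x -> exists r, Rf x = r%:E.
Proof. by move=> [h _]; apply: efin_of => //; case: hRp. Qed.

Lemma nonexp (R : realType) (X : lmodType R) (Y : normedModType R)
  (ip : Y -> Y -> R) (hip : is_inner_product ip) (A : {linear X -> Y})
  (Rf : X -> \bar R) (hRp : proper_fun Rf) (hRc : convex_efun Rf)
  a g1 g2 x1 x2 : 0 < a -> Rmin A Rf a g1 x1 -> Rmin A Rf a g2 x2 ->
  `|A x1 - A x2| <= `|g1 - g2| /\
  `|(g1 - A x1) - (g2 - A x2)| <= `|g1 - g2|.
Proof.
move=> a0 h1 h2.
have [r1 e1] := rmin_fin hRp h1; have [r2 e2] := rmin_fin hRp h2.
have v1 := vi hip hRp hRc a0 h1 e1 e2.
have v2 := vi hip hRp hRc a0 h2 e2 e1.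
set D := A x1 - A x2 in v1 v2 *; set G := g1 - g2.
have hD : A x2 - A x1 = - D by rewrite /D opprB.
rewrite hD -(scaleN1r D) (ipZr hip) in v2.
have ai : 0 < a^-1 by rewrite invr_gt0.
have key : 0 <= ip (g1 - A x1) D - ip (g2 - A x2) D.
  have : 0 <= a^-1 * (ip (g1 - A x1) D - ip (g2 - A x2) D) by nra.
  by rewrite pmulr_rge0.
have eGD : (g1 - A x1) - (g2 - A x2) = G - D.
  by rewrite /G /D opprB opprD !addrA opprK addrAC [g1 - g2 - _]addrAC.
rewrite -(ipBl hip) eGD (ipBl hip) (ipnn hip) in key.
have cs := ip_CS hip G D.
have nD : 0 <= `|D| by [].
have nG : 0 <= `|G| by [].
rewrite expr2 in key.
split.
  move: key cs nD nG; set d := `|D|; set gg := `|G|; set pp := ip G D; clear; move=> *; nra.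
rewrite eGD -expr2 in key *.
have e := ip_expand hip G D.
have hsq : `|G - D| ^+ 2 <= `|G| ^+ 2 by rewrite e; nra.
have nGD : 0 <= `|G - D| by [].
nra.
Qed.

Lemma mixed (R : realType) (X : lmodType R) (Y : normedModType R)
  (ip : Y -> Y -> R) (hip : is_inner_product ip) (A : {linear X -> Y})
  (Rf : X -> \bar R) (hRp : proper_fun Rf) (hRc : convex_efun Rf)
  a b g x1 x2 : 0 < a -> 0 < b -> Rmin A Rf a g x1 -> Rmin A Rf b (A x1) x2 ->
  `|A x1 - A x2| <= b / a * `|g - A x1|.
Proof.
move=> a0 b0 h1 h2.
have [r1 e1] := rmin_fin hRp h1; have [r2 e2] := rmin_fin hRp h2.
have v1 := vi hip hRp hRc a0 h1 e1 e2.
have v2 := vi hip hRp hRc b0 h2 e2 e1.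
set D := A x1 - A x2 in v1 v2 *.
have hD : A x2 - A x1 = - D by rewrite /D opprB.
rewrite hD -(scaleN1r D) (ipZr hip) (ipnn hip) in v2.
have cs := ip_CS hip (g - A x1) D.
set d := `|D| in v2 cs *; set u := `|g - A x1| in cs *.
have d0 : 0 <= d by rewrite /d normr_ge0.
have u0 : 0 <= u by rewrite /u normr_ge0.
have ai : 0 < a^-1 by rewrite invr_gt0.
have bi : 0 < b^-1 by rewrite invr_gt0.
have h : b^-1 * d ^+ 2 <= a^-1 * (u * d) by nra.
have h' : d ^+ 2 <= b / a * u * d.
  have -> : b / a * u * d = b * (a^-1 * (u * d)) by rewrite !mulrA.
  by rewrite -[d ^+ 2]mul1r -(mulfV (lt0r_neq0 b0)) -mulrA ler_pM2l.
have k0 : 0 <= b / a * u by rewrite mulr_ge0 // ltW // divr_gt0.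
nra.
Qed.

Lemma Tik_split (R : realType) (X : Type) (Y : normedModType R)
  (A : X -> Y) (Rf : X -> \bar R) (a : R) (g : Y) (x : X) :
  Tik A Rf a x g = (((2 * a)^-1 * `|g - A x| ^+ 2)%:E + Rf x)%E.
Proof. by []. Qed.

Lemma lsc_T (R : realType) (X : tvsType R) (hX : hausdorff_space X)
  (Y : normedModType R) (ip : Y -> Y -> R) (hip : is_inner_product ip)
  (A : {linear X -> Y})
  (hA : forall y : Y, continuous (fun x : X => ip (A x) y))
  (Rf : X -> \bar R) (hRp : proper_fun Rf)
  (hRk : forall c : R, compact [set x : X | (Rf x <= c%:E)%E])
  a g (a0 : 0 < a) z (t : R) :
  (t%:E < Tik A Rf a z g)%E -> nbhs z [set x | (t%:E < Tik A Rf a x g)%E].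
Proof.
pose q x := (2 * a)^-1 * `|g - A x| ^+ 2.
have Tq x : Tik A Rf a x g = ((q x)%:E + Rf x)%E by [].
rewrite Tq => htz.
have [e [b [e0 [hb hbz]]]] : exists e b, 0 < e /\ t <= b + q z - e /\ (b%:E < Rf z)%E.
  case Ez: (Rf z) htz => [r| |] htz.
  - rewrite -EFinD lte_fin in htz.
    exists ((q z + r - t) / 2), (r - (q z + r - t) / 2).
    split; first lra. by split; [lra | rewrite lte_fin; lra].
  - by exists 1, (t - q z + 1); split; [lra | split; [lra | rewrite ltry]].
  - by case: hRp => h _; have := h z; rewrite Ez.
have N1 : nbhs z [set x | (b%:E < Rf x)%E].
  apply: open_nbhs_nbhs; split => //.
  have -> : [set x | (b%:E < Rf x)%E] = ~` [set x | (Rf x <= b%:E)%E].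
    apply/funext => x; apply/propext; rewrite /= ltNge.
    by split => [/negP|/negP].
  exact: closed_openC (compact_closed hX (hRk b)).
have N2 : nbhs z [set x | q z - e < q x].
  set w := g - A z.
  have H := @cvgr_dist_lt _ _ _ _ (nbhs_filter z) _ _ (hA w z) _ (mulr_gt0 a0 e0).
  move: H; apply: filterS => x /= hx.
  move: hx; rewrite ltr_norml => /andP [hx1 _].
  have i1 : ip (g - A x) w = ip g w - ip (A x) w by rewrite (ipBl hip).
  have i2 : ip g w - ip (A z) w = `|w| ^+ 2 by rewrite -(ipBl hip) (ipnn hip).
  have cs := ip_CS hip (g - A x) w.
  set p := `|g - A x| in cs *; set s := `|w| in i2 cs *.
  have p0 : 0 <= p by rewrite /p normr_ge0.
  have s0 : 0 <= s by rewrite /s normr_ge0.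
  have K0 : 0 < (2 * a)^-1 by rewrite invr_gt0 mulr_gt0.
  have Ka : (2 * a)^-1 * (2 * a) = 1 by rewrite mulVf // gt_eqF // mulr_gt0.
  rewrite /q -/w -/p -/s.
  have sq : 0 <= (p - s) ^+ 2 by exact: sqr_ge0.
  have hp : s ^+ 2 - 2 * a * e < p ^+ 2 by nra.
  nra.
apply: filterS (filterI N1 N2) => x /= [h1 h2].
rewrite Tq; case Ex: (Rf x) h1 => [r| |] h1 //.
- by rewrite -EFinD lte_fin; rewrite lte_fin in h1; lra.
- by rewrite addey // ltry.
Qed.

Lemma Rf_le_T (R : realType) (X : Type) (Y : normedModType R)
  (A : X -> Y) (Rf : X -> \bar R) (a : R) (g : Y) (x : X) : 0 < a ->
  (Rf x <= Tik A Rf a x g)%E.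
Proof.
move=> a0; rewrite Tik_split.
have q0 : 0 <= (2 * a)^-1 * `|g - A x| ^+ 2.
  by rewrite mulr_ge0 // ?exprn_ge0 // ltW // invr_gt0 mulr_gt0.
case: (Rf x) => [r| |] //=; try by rewrite ?addey.
by rewrite -EFinD lee_fin; lra.
Qed.

Lemma exists_min (R : realType) (X : tvsType R) (hX : hausdorff_space X)
  (Y : normedModType R) (ip : Y -> Y -> R) (hip : is_inner_product ip)
  (A : {linear X -> Y})
  (hA : forall y : Y, continuous (fun x : X => ip (A x) y))
  (Rf : X -> \bar R) (hRp : proper_fun Rf)
  (hRk : forall c : R, compact [set x : X | (Rf x <= c%:E)%E])
  (a : R) (g : Y) (a0 : 0 < a) : exists x, Rmin A Rf a g x.
Proof.
pose T x := Tik A Rf a x g.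
have TRf x : (Rf x <= T x)%E by exact: Rf_le_T.
have [z0 hz0] := hRp.2.
have [r0 er0] := efin_of (hRp.1 z0) hz0.
pose c0 := (2 * a)^-1 * `|g - A z0| ^+ 2 + r0.
have Tz0 : T z0 = c0%:E by rewrite /T Tik_split er0 -EFinD.
pose m := ereal_inf (range T).
have hm : (m <= c0%:E)%E by rewrite -Tz0; apply: ereal_inf_lbound; exists z0.
pose I := [set t : R | (m < t%:E)%E /\ t <= c0 + 1].
pose B t := [set x | (T x <= t%:E)%E].
have FF : Filter (filter_from I B).
  apply: filter_from_filter.
    exists (c0 + 1); split; last exact: lexx.
    by apply: le_lt_trans hm _; rewrite lte_fin; lra.
  move=> i j Ii Ij; have [hij|hij] := leP i j.
    exists i => // x /= hx; split => //; apply: le_trans hx _; by rewrite lee_fin.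
  exists j => // x /= hx; split => //; apply: le_trans hx _; by rewrite lee_fin ltW.
have PF : ProperFilter (filter_from I B).
  apply: filter_from_proper => t [mt _].
  have [y [x _ <-] yt] := ereal_inf_lt mt.
  by exists x; rewrite /B /= ltW.
have FK : filter_from I B [set x | (Rf x <= (c0 + 1)%:E)%E].
  exists (c0 + 1); first by split => //; apply: le_lt_trans hm _; rewrite lte_fin; lra.
  by move=> x /= hx; apply: le_trans (TRf x) hx.
have [z [Kz cz]] := hRk (c0 + 1) _ PF FK.
have hTz : forall t, I t -> (T z <= t%:E)%E.
  move=> t It; rewrite leNgt; apply/negP => htz.
  have N := lsc_T hX hip hA hRp hRk a0 htz.
  have [x [/= hx1 hx2]] := cz (B t) _ (ex_intro2 _ _ t It (fun _ h => h)) N.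
  by move: hx1; rewrite /B /= leNgt hx2.
have I1 : I (c0 + 1).
  by split; [apply: le_lt_trans hm _; rewrite lte_fin; lra | exact: lexx].
have Tz1 := hTz _ I1.
have [v ev] : exists v, T z = v%:E.
  apply: efin_of.
    apply/negP => /eqP h; have := TRf z; rewrite h leeNy_eq => /eqP.
    by case: hRp => hh _; apply/eqP; exact: hh.
  by apply: le_lt_trans Tz1 _; rewrite ltry.
have Tzm : (T z <= m)%E.
  rewrite leNgt; apply/negP => hlt.
  rewrite ev lee_fin in Tz1; rewrite ev in hlt.
  case Em : m hlt hm => [m'| |] hlt hm.
  - rewrite lte_fin in hlt.
    have It : I ((m' + v) / 2) by split; [rewrite Em lte_fin; lra | lra].
    by have := hTz _ It; rewrite ev lee_fin; lra.
  - by [].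
  - have It : I (v - 1) by split; [rewrite Em ltNyr | lra].
    by have := hTz _ It; rewrite ev lee_fin; lra.
exists z; split.
  by apply: le_lt_trans (TRf z) _; rewrite ev ltry.
move=> w _; apply: le_trans Tzm _.
by apply: ereal_inf_lbound; exists w.
Qed.

Lemma K_bound (R : realType) (X : Type) (Y : normedModType R)
  (A : X -> Y) (Rf : X -> \bar R) (nu varrho : R) x a xa :
  Kset A Rf nu varrho x -> 0 < a -> Rmin A Rf a (A x) xa ->
  `|A x - A xa| <= varrho * a `^ nu.
Proof.
move=> hx a0 hxa.
have h : ((a `^ (- nu) * `|A x - A xa|)%:E <= rho_nu A Rf nu x)%E.
  by apply: ereal_sup_ubound; exists a, xa; split.
have := le_trans h hx; rewrite lee_fin powRN mulrC.
by rewrite ler_pdivrMr // powR_gt0.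
Qed.

Unset Implicit Arguments. Set Strict Implicit.

Theorem proposition3p11
  (R : realType)
  (X : tvsType R) (hX : hausdorff_space X)
  (nX : X -> R) (hnX : is_banach_norm nX)
  (Y : completeNormedModType R) (ip : Y -> Y -> R) (hip : is_inner_product ip)
  (A : {linear X -> Y})
  (hA : forall y : Y, continuous (fun x : X => ip (A x) y))
  (Rf : X -> \bar R) (hRp : proper_fun Rf) (hRc : convex_efun Rf)
  (hRk : forall c : R, compact [set x : X | (Rf x <= c%:E)%E])
  (nu varrho cl alpha delta : R)
  (hnu : 0 < nu <= 1) (hvarrho : 0 < varrho) (hcl : 0 < cl)
  (halpha : 0 < alpha) (hdelta : 0 < delta)
  (x : X) (hx : Kset A Rf nu varrho x)
  (gd : Y) (hgd : `|gd - A x| <= delta)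
  (xh : X) (hxh : Rmin A Rf alpha gd xh) :
  cl * varrho `^ (- nu^-1) * delta `^ (nu^-1) <= alpha ->
  (rho_nu A Rf nu xh <= ((2 + cl `^ (- nu)) * varrho)%:E)%E.
Proof.
move=> hc.
have /andP [nu0 nu1] := hnu.
set C := cl `^ nu.
have C0 : 0 < C by rewrite powR_gt0.
set P := alpha `^ nu.
have P0 : 0 < P by rewrite powR_gt0.
have hdel : delta <= varrho * C^-1 * P.
  have hl : cl * varrho `^ (- nu^-1) * delta `^ (nu^-1) \in Num.nneg.
    by rewrite nnegrE mulr_ge0 ?powR_ge0 // mulr_ge0 ?powR_ge0 // ltW.
  have hr : alpha \in Num.nneg by rewrite nnegrE ltW.
  have := @ge0_ler_powR _ nu (ltW nu0) _ _ hl hr hc.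
  rewrite !powRM ?mulr_ge0 ?powR_ge0 ?(ltW hcl) // -/C -/P.
  rewrite -!powRrM mulNr mulVf ?gt_eqF // powRN powRr1 ?(ltW hvarrho) //.
  rewrite powRr1 ?(ltW hdelta) // => h.
  have -> : delta = (C^-1 * varrho) * (C * varrho^-1 * delta).
    by field; rewrite !gt_eqF.
  by rewrite [varrho * _]mulrC ler_wpM2l // mulr_ge0 // ltW // invr_gt0.
have [xa hxa] := exists_min hX hip hA hRp hRk (A x) halpha.
have hKa := K_bound hx halpha hxa; rewrite -/P in hKa.
have [n1 n2] := nonexp hip hRp hRc halpha hxh hxa.
have Ci0 : 0 <= C^-1 by rewrite invr_ge0 ltW.
rewrite /rho_nu; apply: ge_ereal_sup => _ [b [y [b0 hy ->]]].
rewrite lee_fin powRN mulrC -/C ler_pdivrMr ?powR_gt0 //.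
set Q := b `^ nu.
have Q0 : 0 < Q by rewrite powR_gt0.
set d := `|A xh - A y|.
have hv0 : 0 <= varrho by exact: ltW.
have [hba|hab] := leP b alpha.
- have m := mixed hip hRp hRc halpha b0 hxh hy.
  have r1 : `|gd - A xh| <= `|(gd - A xh) - (A x - A xa)| + `|A x - A xa|.
    by have := ler_normD ((gd - A xh) - (A x - A xa)) (A x - A xa); rewrite subrK.
  have hu : `|gd - A xh| <= varrho * (1 + C^-1) * P by nra.
  have hbP : b / alpha * P <= Q.
    have eb : b = b `^ (1 - nu) * Q.
      by rewrite /Q -powRD ?subrK ?powRr1 ?ltW ?oner_eq0.
    have ea : alpha = alpha `^ (1 - nu) * P.
      by rewrite /P -powRD ?subrK ?powRr1 ?ltW ?oner_eq0.
    have hpw : b `^ (1 - nu) <= alpha `^ (1 - nu).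
      by apply: ge0_ler_powR; rewrite ?nnegrE; lra.
    rewrite mulrAC ler_pdivrMr // {1}eb ea.
    have h := ler_wpM2r (ltW (mulr_gt0 Q0 P0)) hpw.
    have E1 : b `^ (1 - nu) * Q * P = b `^ (1 - nu) * (Q * P) by ring.
    have E2 : Q * (alpha `^ (1 - nu) * P) = alpha `^ (1 - nu) * (Q * P) by ring.
    by rewrite E1 E2.
  have k0 : 0 <= b / alpha by rewrite divr_ge0 // ltW.
  have s1 : d <= b / alpha * (varrho * (1 + C^-1) * P).
    by apply: le_trans m _; rewrite ler_wpM2l.
  have s2 : b / alpha * (varrho * (1 + C^-1) * P) = varrho * (1 + C^-1) * (b / alpha * P).
    by rewrite mulrCA mulrA.
  have s3 : varrho * (1 + C^-1) * (b / alpha * P) <= varrho * (1 + C^-1) * Q.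
    by rewrite ler_wpM2l // mulr_ge0 //; lra.
  have s4 : varrho * (1 + C^-1) * Q <= (2 + C^-1) * varrho * Q.
    rewrite [_ * varrho]mulrC; apply: ler_wpM2r; [exact: ltW | apply: ler_wpM2l => //; lra].
  by rewrite s2 in s1; rewrite powRN -/C; apply: le_trans s1 (le_trans s3 s4).
- have [xb hxb] := exists_min hX hip hA hRp hRk (A x) b0.
  have hKb := K_bound hx b0 hxb; rewrite -/Q in hKb.
  have [n3 n4] := nonexp hip hRp hRc b0 hy hxb.
  have r1 : d <= `|(A xh - A y) - (A x - A xb)| + `|A x - A xb|.
    by have := ler_normD ((A xh - A y) - (A x - A xb)) (A x - A xb); rewrite subrK.
  have r2 : `|A xh - A x| <= `|A xh - A xa| + `|A x - A xa|.
    by rewrite (distrC (A x)); exact: ler_distD.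
  have PQ : P <= Q.
    by apply: ge0_ler_powR; rewrite ?nnegrE ?ltW.
  have CPQ : C^-1 * P <= C^-1 * Q by rewrite ler_wpM2l.
  have e1 : varrho * C^-1 * P <= varrho * C^-1 * Q by rewrite -!mulrA ler_wpM2l.
  have e2 : varrho * P <= varrho * Q by rewrite ler_wpM2l.
  rewrite powRN -/C; lra.
Qed.
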